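(* Fix integers $c\ge2$, $k\ge2$. Let $P$ be the RAM program that, on a dataset $x$ with $n=|x|$ (read from $\texttt{input\_len}$), performs independent biased coin flips where flip number $i+1$ ($i=0,1,2,\dots$) succeeds with probability $\frac{1}{(\max\{n-i,0\}+k)^c}$ (computed by forming $b=\max\{n-i,0\}+k$, computing $b^c$ by $c-1$ multiplications, and drawing randomness), stops at the first success, and outputs the number $i$ of unsuccessful flips preceding it; each loop iteration executes a fixed number of instructions independent of $x$ and $n$, so the runtime is a deterministic (affine) function of the output. Then $P$ is $\varepsilon$-JOT-DP in the unbounded setting, where $\varepsilon=2c\ln\!\big(\frac{k+1}{k-1}\big)$.
   Context: Datasets are finite sequences of records; two datasets are adjacent if their insert-delete distance (minimum number of single-record insertions/deletions transforming one into the other) is at most $1$. A program runs on $x$ in an execution environment $\mathit{env}$ (initial machine state) compatible with $x$, with random output $\mathrm{out}(P(x,\mathit{env}))$ and random runtime $T_P(x,\mathit{env})$ (number of RAM instructions executed). $P$ is $\varepsilon$-JOT-DP in the unbounded setting if for all adjacent datasets $x,x'$ of arbitrary lengths, all compatible $\mathit{env},\mathit{env}'$ and all sets $S$ of (output, runtime) pairs, $\Pr[(\mathrm{out}(P(x,\mathit{env})),T_P(x,\mathit{env}))\in S]\le e^{\varepsilon}\Pr[(\mathrm{out}(P(x',\mathit{env}')),T_P(x',\mathit{env}'))\in S]$. Thus the output has pmf $f_n(i)=p_n(i)\prod_{j=0}^{i-1}(1-p_n(j))$ with $p_n(j)=1/(\max\{n-j,0\}+k)^c$. *)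

(* Defs.v *)
From Stdlib Require Import Reals List.
From Coquelicot Require Import Coquelicot.
Open Scope R_scope.

(* Success probability of coin flip number j+1 on a dataset of size n:
   p_n(j) = 1 / (max(n-j,0) + k)^c   (n - j is truncated nat subtraction). *)
Definition flip_p (c k n j : nat) : R := / (INR ((n - j) + k)%nat) ^ c.

Fixpoint fail_prod (c k n i : nat) : R :=
  match i with
  | O => 1
  | S i' => fail_prod c k n i' * (1 - flip_p c k n i')
  end.
Definition out_pmf (c k n i : nat) : R := flip_p c k n i * fail_prod c k n i.

Definition del_one {T : Type} (x x' : list T) : Prop :=
  exists (a b : list T) (r : T), x = a ++ r :: b /\ x' = a ++ b.

Definition adjacent {T : Type} (x x' : list T) : Prop :=
  x = x' \/ del_one x x' \/ del_one x' x.

(* The program P run on dataset x in environment env (compatible with x):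
   the output i has pmf out_pmf c k |x|, and the runtime is the deterministic
   affine function t0 + t1 * i of the output (t0, t1 : instruction counts that
   do not depend on x, n or env). *)
Definition P_joint_prob {T Env : Type} (c k t0 t1 : nat)
    (x : list T) (env : Env) (S : nat * nat -> bool) : R :=
  Series (fun i => if S (i, (t0 + t1 * i)%nat) then out_pmf c k (length x) i else 0).

Definition JOT_DP_unbounded {T Env : Type} (compat : list T -> Env -> Prop)
    (Pr : list T -> Env -> (nat * nat -> bool) -> R) (eps : R) : Prop :=
  forall (x x' : list T) (env env' : Env),
    adjacent x x' -> compat x env -> compat x' env' ->
    forall S : nat * nat -> bool,
      Pr x env S <= exp eps * Pr x' env' S.

(* Main.v *)
Require Import Defs.
From Stdlib Require Import Reals List Lra Lia.
From Coquelicot Require Import Coquelicot.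
Open Scope R_scope.

Lemma flip_eq c k n j : flip_p c k n j = / (INR (n-j) + INR k)^c.
Proof. unfold flip_p. rewrite plus_INR. reflexivity. Qed.

Lemma fail_shift c k n i :
  fail_prod c k (S n) (S i) = (1 - flip_p c k (S n) 0) * fail_prod c k n i.
Proof.
  induction i.
  - simpl. ring.
  - change (fail_prod c k (S n) (S (S i))) with
      (fail_prod c k (S n) (S i) * (1 - flip_p c k (S n) (S i))).
    rewrite IHi.
    change (fail_prod c k n (S i)) with (fail_prod c k n i * (1 - flip_p c k n i)).
    assert (flip_p c k (S n) (S i) = flip_p c k n i) as -> by reflexivity.
    ring.
Qed.

Lemma p_bounds c k n j : (2 <= k)%nat ->
  0 < flip_p c k n j /\ flip_p c k n j <= / INR k ^ c /\ / INR k ^ c <= 1.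
Proof.
  intros Hk. rewrite flip_eq.
  assert (HK: 2 <= INR k) by (apply (le_INR 2); lia).
  pose proof (pos_INR (n-j)).
  split; [|split].
  - apply Rinv_0_lt_compat, pow_lt; lra.
  - apply Rinv_le_contravar; [apply pow_lt; lra|]. apply pow_incr; lra.
  - rewrite <- Rinv_1. apply Rinv_le_contravar; [lra|]. apply pow_R1_Rle; lra.
Qed.

Lemma fail_nonneg c k n i : (2 <= k)%nat -> 0 <= fail_prod c k n i.
Proof.
  intros Hk. induction i; simpl; [lra|].
  destruct (p_bounds c k n i Hk) as [? [? ?]].
  apply Rmult_le_pos; lra.
Qed.

Lemma out_nonneg c k n i : (2 <= k)%nat -> 0 <= out_pmf c k n i.
Proof.
  intros Hk. unfold out_pmf. destruct (p_bounds c k n i Hk) as [? [? ?]].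
  pose proof (fail_nonneg c k n i Hk). apply Rmult_le_pos; lra.
Qed.

Lemma out_partial c k n m : (2 <= k)%nat ->
  sum_n (out_pmf c k n) m = 1 - fail_prod c k n (S m).
Proof.
  intros Hk. induction m.
  - rewrite sum_O. unfold out_pmf.
    change (fail_prod c k n 1) with (1 * (1 - flip_p c k n 0)). change (fail_prod c k n 0) with 1. match goal with |- ?a = ?b => change (@eq R a b) end. ring.
  - rewrite sum_Sn, IHm. unfold plus; simpl. unfold out_pmf.
    change (fail_prod c k n (S (S m))) with
      (fail_prod c k n (S m) * (1 - flip_p c k n (S m))).
    match goal with |- ?a = ?b => change (@eq R a b) end.
    change (fail_prod c k n (S m)) with (fail_prod c k n m * (1 - flip_p c k n m)). ring.
Qed.

Lemma out_ex_series c k n : (2 <= k)%nat -> ex_series (out_pmf c k n).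
Proof.
  intros Hk.
  destruct (ex_finite_lim_seq_incr (sum_n (out_pmf c k n)) 1) as [l Hl].
  - intros m. rewrite sum_Sn. unfold plus; simpl.
    pose proof (out_nonneg c k n (S m) Hk). lra.
  - intros m. rewrite out_partial by exact Hk.
    pose proof (fail_nonneg c k n (S m) Hk). lra.
  - exists l. exact Hl.
Qed.

Lemma frac_le a b c d : 0 < b -> 0 < d -> a * d <= c * b -> a / b <= c / d.
Proof.
  intros Hb Hd H. unfold Rdiv. apply Rmult_le_reg_r with (b*d); [nra|].
  replace (a * / b * (b * d)) with (a * d) by (field; lra).
  replace (c * / d * (b * d)) with (c * b) by (field; lra). exact H.
Qed.

Lemma N1 (c : nat) (kR b : R) : (1 <= c)%nat -> 2 <= kR -> kR <= b ->
  (kR - 1)^c * b^c <= (kR + 1)^c * (b^c - 1).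
Proof.
  intros Hc Hk Hb. destruct c as [|c']; [lia|].
  simpl. set (M := b * b ^ c').
  assert (HQ: (kR-1)^c' <= (kR+1)^c') by (apply pow_incr; lra).
  assert (HQ0: 0 <= (kR-1)^c') by (apply pow_le; lra).
  assert (Hb1: 1 <= b ^ c') by (apply pow_R1_Rle; lra).
  assert (HM: kR <= M) by (unfold M; nra).
  set (P := (kR+1)^c') in *. set (Q := (kR-1)^c') in *.
  assert (0 <= (P - Q) * M * (kR - 1)) by (apply Rmult_le_pos; [apply Rmult_le_pos|]; lra).
  assert (0 <= P * (2*M - kR - 1)) by (apply Rmult_le_pos; lra).
  nra.
Qed.

Lemma R1 (c : nat) (kR b b' : R) : 2 <= kR -> kR <= b' -> 0 <= b -> b <= b' + 1 ->
  (kR - 1)^c * b^c <= (kR + 1)^c * b'^c.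
Proof.
  intros. rewrite <- !Rpow_mult_distr. apply pow_incr. split; nra.
Qed.

Lemma point c k n i : (2 <= c)%nat -> (2 <= k)%nat ->
  let U := (INR k - 1)^c in let V := (INR k + 1)^c in
  out_pmf c k (S n) i <= V*V/(U*U) * out_pmf c k n i /\
  out_pmf c k n i <= V*V/(U*U) * out_pmf c k (S n) i.
Proof.
  intros Hc Hk U V.
  assert (HK: 2 <= INR k) by (apply (le_INR 2); lia).
  set (kR := INR k) in *.
  assert (HU: 0 < U) by (apply pow_lt; lra).
  assert (HUV: U <= V) by (apply pow_incr; lra).
  assert (HV: 0 < V) by lra.
  assert (HE: 1 <= V*V/(U*U)).
  { replace 1 with ((U*U)/(U*U)) by (field; lra). assert (HUU: U*U <= V*V) by (apply Rmult_le_compat; lra). apply frac_le; [nra|nra|]. apply Rmult_le_compat_r; nra. }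
  destruct i as [|i].
  - unfold out_pmf. simpl fail_prod. rewrite !flip_eq. rewrite Nat.sub_0_r, Nat.sub_0_r.
    rewrite S_INR. fold kR.
    pose proof (pos_INR n).
    set (X := (INR n + kR)^c). set (Y := (INR n + 1 + kR)^c).
    assert (HX: 0 < X) by (apply pow_lt; lra).
    assert (HXY: X <= Y) by (apply pow_incr; lra).
    assert (HUY: U * Y <= V * X) by (apply R1; lra).
    rewrite !Rmult_1_r. split.
    + apply Rle_trans with (/X). apply Rinv_le_contravar; lra.
      rewrite <- (Rmult_1_l (/X)) at 1. apply Rmult_le_compat_r; [|lra].
      apply Rlt_le, Rinv_0_lt_compat; lra.
    + replace (/X) with (1/X) by (unfold Rdiv; ring).
      replace (V * V / (U * U) * / Y) with ((V*V)/(U*U*Y)) by (field; lra).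
      apply frac_le; [lra|apply Rmult_lt_0_compat; [nra|lra]|]. assert (U*(U*Y) <= U*(V*X)) by (apply Rmult_le_compat_l; lra). assert (U*(V*X) <= V*(V*X)) by (apply Rmult_le_compat_r; nra). nra.
  - unfold out_pmf. rewrite fail_shift.
    change (fail_prod c k n (S i)) with (fail_prod c k n i * (1 - flip_p c k n i)).
    assert (flip_p c k (S n) (S i) = flip_p c k n i) as -> by reflexivity.
    pose proof (fail_nonneg c k n i Hk) as HF.
    destruct (p_bounds c k (S n) 0 Hk) as [Hq0 [Hq1 _]].
    destruct (p_bounds c k n i Hk) as [Hp0 [Hp0' _]].
    destruct (p_bounds c k n (S i) Hk) as [Hp1 [Hp1' _]].
    fold kR in Hq1, Hp0', Hp1'.
    set (F := fail_prod c k n i) in *. set (q := flip_p c k (S n) 0) in *.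
    assert (Hd: (n - S i <= n - i <= n - S i + 1)%nat) by lia.
    destruct Hd as [Hd1 Hd2]. apply le_INR in Hd1. apply le_INR in Hd2. rewrite plus_INR in Hd2.
    simpl (INR 1) in Hd2.
    pose proof (pos_INR (n - S i)).
    assert (HKK: 1 <= kR ^ c) by (apply pow_R1_Rle; lra).
    assert (Hc1: (1 <= c)%nat) by lia.
    set (K := kR ^ c) in *.
    revert Hp0 Hp0' Hp1 Hp1'. rewrite !flip_eq. fold kR. intros Hp0 Hp0' Hp1 Hp1'.
    set (d0 := INR (n - i)) in *. set (d1 := INR (n - S i)) in *.
    set (X := (d0 + kR)^c) in *. set (Y := (d1 + kR)^c) in *.
    assert (HX: 0 < X) by (apply pow_lt; lra).
    assert (HY: 0 < Y) by (apply pow_lt; lra).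
    assert (HYX: Y <= X) by (apply pow_incr; lra).
    assert (HN1X: U * X <= V * (X - 1)) by (apply N1; auto; lra).
    assert (HN1K: U * K <= V * (K - 1)) by (apply N1; auto; lra).
    assert (HR1: U * X <= V * Y) by (apply R1; lra).
    assert (Ka: /X <= V*V/(U*U) * /Y * (1 - /X)).
    { replace (/X) with (1/X) at 1 by (unfold Rdiv; ring).
      replace (V*V/(U*U) * /Y * (1 - /X)) with (V*V*(X-1)/(U*U*Y*X)) by (field; lra).
      apply frac_le; [lra| apply Rmult_lt_0_compat; [apply Rmult_lt_0_compat|]; nra|].
      assert (U*(U*Y) <= V*(V*(X-1))).
      { apply Rle_trans with (U*(V*(X-1))). apply Rmult_le_compat_l; nra.
        apply Rmult_le_compat_r; nra. }
      nra. }
    assert (Kb: /Y <= V*V/(U*U) * /X * (1 - /K)).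
    { replace (/Y) with (1/Y) at 1 by (unfold Rdiv; ring).
      replace (V*V/(U*U) * /X * (1 - /K)) with (V*V*(K-1)/(U*U*X*K)) by (field; lra).
      apply frac_le; [lra| apply Rmult_lt_0_compat; [apply Rmult_lt_0_compat|]; nra|].
      assert ((U*X)*(U*K) <= (V*Y)*(V*(K-1))) by (apply Rmult_le_compat; nra).
      nra. }
    assert (HinvX: 0 < /X) by (apply Rinv_0_lt_compat; lra).
    assert (HinvY: 0 < /Y) by (apply Rinv_0_lt_compat; lra).
    assert (HinvK: /K <= 1) by (rewrite <- Rinv_1; apply Rinv_le_contravar; lra).
    set (E := V*V/(U*U)) in *.
    split.
    + apply Rle_trans with (/X * F). apply Rmult_le_compat_l; nra.
      apply Rle_trans with (E * /Y * (1 - /X) * F). apply Rmult_le_compat_r; lra.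
      right. ring.
    + apply Rle_trans with (/Y * F). apply Rmult_le_compat_l; [lra|].
      assert (0 <= F * /X) by nra. nra.
      apply Rle_trans with (E * /X * (1 - /K) * F). apply Rmult_le_compat_r; lra.
      assert (0 <= E * /X * F) by (apply Rmult_le_pos; [apply Rmult_le_pos|]; lra).
      nra.
Qed.

Lemma eps_eq c k : (2 <= k)%nat ->
  exp (2 * INR c * ln ((INR k + 1) / (INR k - 1))) =
  (INR k + 1)^c * (INR k + 1)^c / ((INR k - 1)^c * (INR k - 1)^c).
Proof.
  intros Hk. assert (HK: 2 <= INR k) by (apply (le_INR 2); lia).
  assert (Hr: 0 < (INR k + 1) / (INR k - 1)) by (apply Rdiv_lt_0_compat; lra).
  replace (2 * INR c * ln ((INR k + 1) / (INR k - 1))) with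
    (INR c * ln ((INR k + 1) / (INR k - 1)) + INR c * ln ((INR k + 1) / (INR k - 1))) by ring.
  rewrite exp_plus. fold (Rpower ((INR k + 1) / (INR k - 1)) (INR c)).
  rewrite Rpower_pow by exact Hr. unfold Rdiv. rewrite Rpow_mult_distr, pow_inv.
  assert (0 < (INR k - 1)^c) by (apply pow_lt; lra).
  field. lra.
Qed.

Lemma compare c k t0 t1 m m' (S : nat * nat -> bool) : (2 <= c)%nat -> (2 <= k)%nat ->
  (forall i, out_pmf c k m i <= exp (2 * INR c * ln ((INR k + 1) / (INR k - 1))) * out_pmf c k m' i) ->
  Series (fun i => if S (i, (t0 + t1 * i)%nat) then out_pmf c k m i else 0) <=
  exp (2 * INR c * ln ((INR k + 1) / (INR k - 1))) *
  Series (fun i => if S (i, (t0 + t1 * i)%nat) then out_pmf c k m' i else 0).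
Proof.
  intros Hc Hk H. set (ee := exp _) in *.
  assert (Hee: 0 < ee) by apply exp_pos.
  rewrite <- Series_scal_l. apply Series_le.
  - intros i. destruct (S _).
    + split; [apply out_nonneg; exact Hk|apply H].
    + lra.
  - assert (Hex: ex_series (fun i => if S (i, (t0 + t1 * i)%nat) then out_pmf c k m' i else 0)).
    2: { pose proof (@ex_series_scal_l R_AbsRing R_NormedModule ee _ Hex) as H2. exact H2. }
    apply (@ex_series_le R_AbsRing R_CompleteNormedModule _ (out_pmf c k m')); [|apply out_ex_series; exact Hk].
    intros i. change (norm ?x) with (Rabs x). pose proof (out_nonneg c k m' i Hk).
    destruct (S _); rewrite Rabs_pos_eq; lra.
Qed.

Lemma del_len {T} (x x' : list T) : del_one x x' -> length x = Datatypes.S (length x').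
Proof.
  intros [a [b [r [-> ->]]]]. rewrite !length_app. simpl. lia.
Qed.

Theorem mainTheorem8 (c k t0 t1 : nat) (T Env : Type)
    (compat : list T -> Env -> Prop) :
  (2 <= c)%nat -> (2 <= k)%nat ->
  JOT_DP_unbounded compat (@P_joint_prob T Env c k t0 t1)
    (2 * INR c * ln ((INR k + 1) / (INR k - 1))).
Proof.
  intros Hc Hk x x' env env' Hadj _ _ S. unfold P_joint_prob.
  apply compare; [exact Hc|exact Hk|].
  intros i. rewrite eps_eq by exact Hk.
  replace ((INR k + 1) ^ c * (INR k + 1) ^ c / ((INR k - 1) ^ c * (INR k - 1) ^ c))
    with (let U := (INR k - 1)^c in let V := (INR k + 1)^c in V*V/(U*U)) by reflexivity.
  destruct Hadj as [-> | [Hd | Hd]].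
  - pose proof (point c k (length x') i Hc Hk) as [H1 H2]. simpl in *.
    assert (HK: 2 <= INR k) by (apply (le_INR 2); lia).
    set (U := (INR k - 1)^c) in *. set (V := (INR k + 1)^c) in *.
    assert (HU: 0 < U) by (apply pow_lt; lra).
    assert (HUV: U <= V) by (apply pow_incr; lra).
    assert (HE: 1 <= V*V/(U*U)).
    { replace 1 with ((U*U)/(U*U)) by (field; lra).
      assert (HUU: U*U <= V*V) by (apply Rmult_le_compat; lra).
      apply frac_le; [nra|nra|]. apply Rmult_le_compat_r; nra. }
    pose proof (out_nonneg c k (length x') i Hk). nra.
  - rewrite (del_len _ _ Hd). apply point; assumption.
  - rewrite (del_len _ _ Hd). apply point; assumption.
Qed.
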